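(* Let $S$ be a tree and define $P_S:\mathbb N\to\mathbb N$ by $P_S(n)=sh(S,L_n)$. Then there is a polynomial with rational coefficients, of degree $|S|$ and leading coefficient $(S!)^{-1}$, whose value at every $n\in\mathbb N$ equals $P_S(n)$. Here $|S|$ is the number of vertices of $S$ and $$S!=\prod_{v\in V(S)}|S_v|,$$ where $S_v$ is the maximal subtree of $S$ having $v$ as its root vertex and $|S_v|$ its number of vertices.
   Context: A tree is a finite connected graph without cycles whose external edges are open. One external edge is the root; the others are leaves. Each vertex has one outgoing edge (towards the root) and a strictly positive number of incoming edges. No planar structure. $V(S)$ is the vertex set. For a vertex $v$, $S_v$ consists of the outgoing edge of $v$ together with all edges above it. $L_n$ denotes the linear tree with $n$ vertices, all of valence $1$ ($L_0=\eta$, the tree with one edge and no vertices). Shuffle: for trees $S,T$ with root edges $r_S,r_T$, a shuffle is a tree $A$ with edges labelled by pairs $(s,t)\in E(S)\times E(T)$ such that: (1) the root of $A$ is labelled $(r_S,r_T)$; (2) the labelling restricts to a bijection from leaves of $A$ onto $\mathrm{Leaves}(S)\times\mathrm{Leaves}(T)$; (3) if an edge labelled $(s,t)$ is not a leaf, the incoming edges of the vertex of $A$ above it are labelled either exactly $(s_1,t),\dots,(s_m,t)$ for $s_1,\dots,s_m$ the edges immediately above $s$ in $S$, or exactly $(s,t_1),\dots,(s,t_n)$ for $t_1,\dots,t_n$ the edges immediately above $t$ in $T$. Shuffles are taken up to isomorphism of labelled trees; $sh(S,T)$ is their number. *)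

(* Defs.v *)
From HB Require Import structures.
From mathcomp Require Import all_boot all_order all_algebra.
From Stdlib Require List Permutation.
Set Implicit Arguments. Unset Strict Implicit. Unset Printing Implicit Defensive.

(* Rooted trees, represented by their root edge:
   [Eta] is an edge with no vertex above it (an open/leaf edge);
   [Vx ts] is an edge whose upper endpoint is a vertex with incoming edges ts.
   The planar order of [ts] is irrelevant for all notions below. *)
Inductive tree : Type := Eta | Vx of seq tree.

Fixpoint wf (t : tree) : bool :=
  match t with Eta => true | Vx ts => ~~ nilp ts && all wf ts end.

Fixpoint nvert (t : tree) : nat :=
  match t with Eta => 0 | Vx ts => (sumn (map nvert ts)).+1 end.

(* S! = prod_{v in V(S)} |S_v|; the vertex at the top of the root edge of
   [Vx ts] has S_v = Vx ts, the other vertices are those of the subtrees ts *)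
Fixpoint tfact (t : tree) : nat :=
  match t with Eta => 1 | Vx ts => nvert t * foldr muln 1 (map tfact ts) end.

Fixpoint lin (n : nat) : tree := if n is n'.+1 then Vx [:: lin n'] else Eta.

(* Edges of a tree are addressed by paths from the root (root edge = [::]). *)
Fixpoint sub (t : tree) (p : seq nat) : option tree :=
  match p with
  | [::] => Some t
  | i :: p' => match t with
               | Eta => None
               | Vx ts => if i < size ts then sub (nth Eta ts i) p' else None
               end
  end.

Definition is_edge (t : tree) (p : seq nat) : bool :=
  if sub t p is Some _ then true else false.
Definition is_leaf (t : tree) (p : seq nat) : bool :=
  if sub t p is Some Eta then true else false.
Definition above (t : tree) (p : seq nat) : seq (seq nat) :=
  if sub t p is Some (Vx ts) then [seq rcons p i | i <- iota 0 (size ts)] else [::].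

(* Labelled (non-planar) trees, again represented by their root edge:
   [LT l cs] is an edge labelled l; cs = [::] means it is a leaf edge,
   otherwise cs are the incoming edges of the vertex above it. *)
Inductive ltree (L : Type) : Type := LT of L & seq (ltree L).

Definition lab L (a : ltree L) : L := let: LT l _ := a in l.

Fixpoint labels L (a : ltree L) : seq L :=
  let: LT l cs := a in l :: flatten (map (@labels L) cs).

Fixpoint leaf_labels L (a : ltree L) : seq L :=
  let: LT l cs := a in
  if cs is [::] then [:: l] else flatten (map (@leaf_labels L) cs).

Fixpoint all_nodes L (P : L -> seq L -> bool) (a : ltree L) : bool :=
  let: LT l cs := a in P l (map (@lab L) cs) && all (all_nodes P) cs.

Inductive liso (L : Type) : ltree L -> ltree L -> Prop :=
| liso_intro (l : L) (cs cs' cs'' : seq (ltree L)) :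
    Permutation.Permutation cs' cs'' -> List.Forall2 (@liso L) cs cs'' ->
    liso (LT l cs) (LT l cs').

Definition label := (seq nat * seq nat)%type.

Definition is_shuffle (S T : tree) (A : ltree label) : Prop :=
  [/\ lab A = ([::], [::]),
      (forall x, x \in labels A -> is_edge S x.1 && is_edge T x.2),
      uniq (leaf_labels A),
      (forall s t, ((s, t) \in leaf_labels A) = is_leaf S s && is_leaf T t) &
      all_nodes (fun x ls =>
        let: (s, t) := x in
        [|| ls == [::],
            perm_eq ls [seq (s', t) | s' <- above S s]
          | perm_eq ls [seq (s, t') | t' <- above T t]]) A].

Definition num_classes (X : Type) (P : X -> Prop) (R : X -> X -> Prop) (k : nat) :=
  exists f : 'I_k -> X,
    [/\ forall i, P (f i),
        forall i j, R (f i) (f j) -> i = j &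
        forall x, P x -> exists i, R x (f i)].

Definition sh_is (S T : tree) (k : nat) : Prop :=
  num_classes (is_shuffle S T) (@liso label) k.

(* Main.v *)
Require Import Defs.
From HB Require Import structures.
From mathcomp Require Import all_boot all_order all_algebra.
From mathcomp Require Import ring.
From Stdlib Require List Permutation.
Import GRing.Theory Num.Theory.
Set Implicit Arguments. Unset Strict Implicit. Unset Printing Implicit Defensive.

Lemma Forall_nth (X : Type) (P : X -> Prop) (d : X) (s : seq X) :
  List.Forall P s -> forall i, i < size s -> P (nth d s i).
Proof.
elim=> [|x s' Px _ IH] [|i] //=.
exact: IH.
Qed.

Definition tree_ind2 (P : tree -> Prop) (HE : P Eta)
  (HV : forall ts, List.Forall P ts -> P (Vx ts)) : forall t, P t :=
  fix F t := match t with
  | Eta => HE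
  | Vx ts => HV ts ((fix G ts : List.Forall P ts := match ts with
       | [::] => List.Forall_nil P
       | t :: ts' => List.Forall_cons t (F t) (G ts') end) ts) end.

Lemma tree_ind3 (P : tree -> Prop) (HE : P Eta)
  (HV : forall ts, (forall i, i < size ts -> P (nth Eta ts i)) -> P (Vx ts)) :
  forall t, P t.
Proof.
apply: tree_ind2 => // ts H; apply: HV; exact: Forall_nth.
Qed.

Definition ltree_ind2 (L : Type) (P : ltree L -> Prop)
  (H : forall l cs, List.Forall P cs -> P (LT l cs)) : forall a, P a :=
  fix F a := match a with
  | LT l cs => H l cs ((fix G cs : List.Forall P cs := match cs with
       | [::] => List.Forall_nil P
       | c :: cs' => List.Forall_cons c (F c) (G cs') end) cs) end.

Fixpoint leqb (a b : ltree label) : bool :=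
  match a, b with
  | LT l cs, LT l' cs' => (l == l') &&
     (fix go cs cs' := match cs, cs' with
      | [::], [::] => true
      | c :: cs, c' :: cs' => leqb c c' && go cs cs'
      | _, _ => false end) cs cs'
  end.

Lemma leqb_eq : forall a b, leqb a b -> a = b.
Proof.
elim/ltree_ind2 => l cs IH [l' cs'] /= /andP[/eqP <-].
elim: IH cs' => [|c cs0 IHc _ IHl] [|c' cs'] //= /andP[/IHc -> /IHl [->]] //.
Qed.

Lemma leqb_refl : forall a, leqb a a.
Proof.
elim/ltree_ind2 => l cs IH /=; rewrite eqxx /=.
by elim: IH => //= c cs0 -> _ ->.
Qed.

Lemma leqbP : Equality.axiom leqb.
Proof.
move=> a b; apply: (iffP idP) => [|->]; [exact: leqb_eq | exact: leqb_refl].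
Qed.

HB.instance Definition _ := hasDecEq.Build (ltree label) leqbP.

Lemma ltree_ind3 (P : ltree label -> Prop)
  (H : forall l cs, (forall c, c \in cs -> P c) -> P (LT l cs)) : forall a, P a.
Proof.
elim/ltree_ind2 => l cs IH; apply: H.
elim: IH => // c cs' Pc _ IH x; rewrite inE => /orP[/eqP->//|]; exact: IH.
Qed.

Fixpoint prodl (X : Type) (ls : seq (seq X)) : seq (seq X) :=
  match ls with
  | [::] => [:: [::]]
  | l :: ls' => [seq x :: y | x <- l, y <- prodl ls']
  end.

Definition stepT (s : seq nat) (m : nat) (b : ltree label) : ltree label :=
  LT (s, nseq m 0) [:: b].

Fixpoint senum (u : tree) (s : seq nat) (m r : nat) {struct u} : seq (ltree label) :=
  match u with
  | Eta => (fix go m r := match r with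
            | 0 => [:: LT (s, nseq m 0) [::]]
            | r'.+1 => map (stepT s m) (go m.+1 r') end) m r
  | Vx ts => (fix go m r :=
       map (LT (s, nseq m 0)) (prodl ((fix ch ts i := match ts with
            | [::] => [::]
            | t :: ts' => senum t (rcons s i) m r :: ch ts' i.+1 end) ts 0))
       ++ match r with 0 => [::] | r'.+1 => map (stepT s m) (go m.+1 r') end) m r
  end.

Fixpoint chl (ts : seq tree) (s : seq nat) (m r i : nat) : seq (seq (ltree label)) :=
  match ts with
  | [::] => [::]
  | t :: ts' => senum t (rcons s i) m r :: chl ts' s m r i.+1
  end.

Lemma senumE0 s m : senum Eta s m 0 = [:: LT (s, nseq m 0) [::]].
Proof. by []. Qed.
Lemma senumES s m r : senum Eta s m r.+1 = map (stepT s m) (senum Eta s m.+1 r).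
Proof. by []. Qed.
Lemma chl_fix ts s m r i :
  (fix ch ts i := match ts with
            | [::] => [::]
            | t :: ts' => senum t (rcons s i) m r :: ch ts' i.+1 end) ts i = chl ts s m r i.
Proof. by elim: ts i => //= t ts IH i; rewrite IH. Qed.

Lemma senumV ts s m r : senum (Vx ts) s m r =
  map (LT (s, nseq m 0)) (prodl (chl ts s m r 0)) ++
  (if r is r'.+1 then map (stepT s m) (senum (Vx ts) s m.+1 r') else [::]).
Proof. by case: r => [|r] /=; rewrite chl_fix. Qed.

Lemma chl_size ts s m r i : size (chl ts s m r i) = size ts.
Proof. by elim: ts i => //= t ts IH i; rewrite IH. Qed.

Lemma chl_nth ts s m r i j : j < size ts ->
  nth [::] (chl ts s m r i) j = senum (nth Eta ts j) (rcons s (i + j)) m r.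
Proof.
elim: ts i j => //= t ts IH i [|j] /=; first by rewrite addn0.
by move=> hj; rewrite IH // addSnnS.
Qed.

Fixpoint cnt (u : tree) (r : nat) : nat :=
  match u with
  | Eta => 1
  | Vx ts => (fix go r := foldr muln 1 (map (fun t => cnt t r) ts) +
                          (if r is r'.+1 then go r' else 0)) r
  end.

Lemma size_prodl (X : Type) (ls : seq (seq X)) :
  size (prodl ls) = foldr muln 1 (map size ls).
Proof. by elim: ls => //= l ls IH; rewrite size_allpairs IH. Qed.

Lemma size_senum u s m r : size (senum u s m r) = cnt u r.
Proof.
elim/tree_ind3: u s m r => [|ts IH] s m r.
  by elim: r m => [|r IHr] m //; rewrite senumES size_map IHr.
have E : forall m r, map size (chl ts s m r 0) = map (fun t => cnt t r) ts.
  move=> {}m {}r; apply: (@eq_from_nth _ 0); rewrite !size_map ?chl_size // => i hi.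
  by rewrite !(nth_map [::]) ?(nth_map Eta) ?chl_size // chl_nth // IH.
elim: r m => [|r IHr] m; rewrite senumV size_cat size_map.
  by rewrite size_prodl E /=.
by rewrite size_map size_prodl E IHr /=.
Qed.

Section PolyPart.
Local Open Scope ring_scope.


Definition dX (d : nat) : {poly rat} := ('X + 1) ^+ d.+1 - 'X ^+ d.+1.

Lemma diffX (d : nat) : (size (dX d) <= d.+1)%N /\ (dX d)`_d = d.+1%:R.
Proof.
rewrite /dX.
elim: d => [|d [IHs IHc]].
  rewrite !expr1 addrC addKr size_poly1 coefC /=; split => //.
set p := ('X + 1) ^+ d.+1 - 'X ^+ d.+1 : {poly rat}.
have -> : ('X + 1) ^+ d.+2 - 'X ^+ d.+2 = p * 'X + ('X + 1) ^+ d.+1 :> {poly rat}.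
  by rewrite /p !exprSr; ring.
have e : ('X + 1 : {poly rat}) = 'X - (-1)%:P by rewrite polyCN opprK.
have hm : ('X + 1 : {poly rat}) ^+ d.+1 \is monic.
  by apply: monic_exp; rewrite e monicXsubC.
have hs : size (('X + 1 : {poly rat}) ^+ d.+1) = d.+2.
  by rewrite e size_exp_XsubC.
split.
  apply: leq_trans (size_polyD _ _) _; rewrite geq_max hs leqnn andbT.
  have [->|p0] := eqVneq p 0; first by rewrite mul0r size_poly0.
  by rewrite size_mulX.
rewrite coefD coefMX /=.
move: hm; rewrite monicE /lead_coef hs => /eqP ->.
by rewrite IHc natr1.
Qed.

Lemma size_le_coef (p : {poly rat}) d :
  (size p <= d.+1)%N -> p`_d = 0 -> (size p <= d)%N.
Proof.
move=> /leq_sizeP h pd; apply/leq_sizeP => i; rewrite leq_eqVlt => /orP[/eqP<-//|].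
exact: h.
Qed.

Lemma antidiff d : forall Q : {poly rat}, (size Q <= d)%N ->
  exists A : {poly rat}, [/\ (size A <= d.+1)%N, A`_d = Q`_d.-1 / d%:R &
    forall x, A.[x + 1] - A.[x] = Q.[x]].
Proof.
elim: d => [|d IH] Q hQ.
  move: hQ; rewrite leqn0 size_poly_eq0 => /eqP ->.
  by exists 0; rewrite size_poly0 coef0 mul0r; split => // x; rewrite !horner0 subrr.
set c := Q`_d.
set D := (c / d.+1%:R) *: dX d.
have [hDs hDc] := diffX d.
have hQ' : (size (Q - D)%R <= d)%N.
  apply: size_le_coef.
    apply: leq_trans (size_polyD _ _) _; rewrite geq_max hQ size_polyN.
    by apply: leq_trans (size_scale_leq _ _) hDs.
  rewrite coefB coefZ hDc mulfVK ?subrr //.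
  by rewrite pnatr_eq0.
have [A' [hAs hAc hAd]] := IH _ hQ'.
exists ((c / d.+1%:R) *: 'X^(d.+1) + A'); split.
- apply: leq_trans (size_polyD _ _) _; rewrite geq_max (leq_trans hAs) // andbT.
  by apply: leq_trans (size_scale_leq _ _) _; rewrite size_polyXn.
- rewrite coefD coefZ coefXn eqxx mulr1.
  by move/leq_sizeP: hAs => ->; rewrite ?addr0.
- move=> x; have := hAd x; rewrite /D /dX !hornerE => h.
  have -> : A'.[x + 1] = Q.[x] - c / d.+1%:R * ((x + 1) ^+ d.+1 - x ^+ d.+1) + A'.[x].
    by rewrite -h subrK.
  ring.
Qed.

Lemma size_coef_eq (p : {poly rat}) d :
  (size p <= d.+1)%N -> p`_d != 0 -> size p = d.+1 /\ lead_coef p = p`_d.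
Proof.
move=> hs hc.
have hs' : size p = d.+1.
  apply/eqP; rewrite eqn_leq hs /=; rewrite ltnNge; apply/negP => /leq_sizeP h.
  by move: hc; rewrite h.
by split => //; rewrite /lead_coef hs'.
Qed.

Lemma sumpoly (Q : {poly rat}) d : size Q = d.+1 ->
  exists R : {poly rat}, [/\ size R = d.+2, lead_coef R = lead_coef Q / d.+1%:R &
    forall r : nat, R.[r%:R] = \sum_(j < r.+1) Q.[j%:R]].
Proof.
move=> hQ.
have [A [hAs hAc hAd]] := @antidiff d.+1 Q (eq_leq hQ).
have lQ : lead_coef Q = Q`_d by rewrite /lead_coef hQ.
have lQ0 : Q`_d != 0.
  by rewrite -lQ lead_coef_eq0 -size_poly_eq0 hQ.
set R := A + Q - (A.[0])%:P.
have hRc : R`_d.+1 = Q`_d / d.+1%:R.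
  rewrite /R coefB coefD coefC /= hAc /=.
  have hz : Q`_d.+1 = 0 by move/leq_sizeP: (eq_leq hQ); apply.
  by rewrite hz addr0 subr0.
have hRs : (size R <= d.+2)%N.
  rewrite /R; apply: leq_trans (size_polyD _ _) _; rewrite geq_max.
  rewrite size_polyN size_polyC; apply/andP; split; last by case: (_ != 0).
  apply: leq_trans (size_polyD _ _) _; rewrite geq_max hAs hQ.
  by rewrite ltnW.
have hne : R`_d.+1 != 0 by rewrite hRc mulf_neq0 // invr_eq0 pnatr_eq0.
have [hs hl] := @size_coef_eq R d.+1 hRs hne.
exists R; split => //; first by rewrite hl hRc lQ.
elim=> [|r IHr].
  by rewrite big_ord_recl big_ord0 addr0 /R !hornerE addrAC subrr add0r.
rewrite big_ord_recr /= -IHr /R !hornerE.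
have := hAd r%:R; rewrite -natr1 => h.
have -> : A.[r%:R + 1] = A.[r%:R] + Q.[r%:R] by rewrite -h; ring.
by ring.
Qed.

Lemma cnt_sum ts r : cnt (Vx ts) r = \sum_(j < r.+1) foldr muln 1 (map (fun t => cnt t j) ts).
Proof.
elim: r => [|r IH]; first by rewrite big_ord_recl big_ord0.
by rewrite big_ord_recr /= -IH addnC.
Qed.

Lemma tfact_gt0 u : (0 < tfact u)%N.
Proof.
elim/tree_ind3: u => // ts IH /=; rewrite muln_gt0 /=.
elim: ts IH => //= t ts IHl IH; rewrite muln_gt0 (IH 0%N) //=.
by apply: IHl => i hi; apply: (IH i.+1).
Qed.

Lemma cnt_poly u : exists p : {poly rat}, [/\ size p = (nvert u).+1,
  lead_coef p = ((tfact u)%:R)^-1 & forall r : nat, p.[r%:R] = (cnt u r)%:R].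
Proof.
elim/tree_ind3: u => [|ts IH].
  by exists 1; rewrite size_poly1 lead_coef1 invr1; split => // r; rewrite hornerE.
have [q [hqs hql hqe]] : exists q : {poly rat}, [/\ size q = (sumn (map nvert ts)).+1,
    lead_coef q = ((foldr muln 1 (map tfact ts))%:R)^-1 &
    forall r : nat, q.[r%:R] = (foldr muln 1 (map (fun t => cnt t r) ts))%:R].
  elim: ts IH => [|t ts IHl] IH.
    by exists 1; rewrite size_poly1 lead_coef1 invr1; split => // r; rewrite hornerE.
  have [p [hps hpl hpe]] := IH 0%N isT.
  have [q [hqs hql hqe]] : exists q : {poly rat}, [/\ size q = (sumn (map nvert ts)).+1,
    lead_coef q = ((foldr muln 1 (map tfact ts))%:R)^-1 &
    forall r : nat, q.[r%:R] = (foldr muln 1 (map (fun t => cnt t r) ts))%:R].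
    by apply: IHl => i hi; apply: (IH i.+1).
  have hne : lead_coef p * lead_coef q != 0.
    rewrite hpl hql mulf_neq0 // invr_eq0 pnatr_eq0 -lt0n //.
      exact: tfact_gt0.
    elim: (ts) => //= t' ts' h; rewrite muln_gt0 h tfact_gt0 //.
  exists (p * q); split.
  - by rewrite size_proper_mul // hps hqs /= addnS.
  - by rewrite lead_coefM hpl hql /= natrM invfM.
  - by move=> r; rewrite hornerM hpe hqe /= natrM.
have [R [hRs hRl hRe]] := sumpoly hqs.
exists R; split => //.
- by rewrite hRl hql /= natrM invfM mulrC.
- by move=> r; rewrite hRe cnt_sum natr_sum; apply: eq_bigr => j _; rewrite hqe.
Qed.
End PolyPart.

Lemma sub_cat S s p : sub S (s ++ p) = if sub S s is Some u then sub u p else None.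
Proof.
elim: s S => [|i s IH] [|ts] //=.
by case: ifP.
Qed.

Lemma sub_nil S : sub S [::] = Some S. Proof. by []. Qed.

Lemma sub_Vx1 ts i : sub (Vx ts) [:: i] = if i < size ts then Some (nth Eta ts i) else None.
Proof. by rewrite /=; case: ifP. Qed.

Lemma sub_rcons S s i : sub S (rcons s i) =
  if sub S s is Some (Vx ts) then (if i < size ts then Some (nth Eta ts i) else None) else None.
Proof.
rewrite -cats1 sub_cat; case: (sub S s) => // -[|ts] //; exact: sub_Vx1.
Qed.

Lemma rcons_nseq0 k : rcons (nseq k 0) 0 = nseq k.+1 0.
Proof. by elim: k => //= k ->. Qed.

Lemma sub_lin n k : k <= n -> sub (lin n) (nseq k 0) = Some (lin (n - k)).
Proof.
elim: k n => [|k IH] [|n] //= hk.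
by rewrite IH.
Qed.

Lemma sub_linE n t u : sub (lin n) t = Some u -> exists2 k, k <= n & t = nseq k 0 /\ u = lin (n - k).
Proof.
elim: t n => [|i t IH] n /=.
  by case=> <-; exists 0 => //; rewrite subn0.
case: n => [|n] //=; case: i => //= /IH [k hk [-> ->]].
by exists k.+1.
Qed.

Lemma above_lin n k : k <= n ->
  above (lin n) (nseq k 0) = if k < n then [:: nseq k.+1 0] else [::].
Proof.
move=> hk; rewrite /above sub_lin //.
case: ltnP => h.
  by rewrite -(subnSK h) /= rcons_nseq0.
by have -> : n - k = 0 by apply/eqP; rewrite subn_eq0.
Qed.

Lemma above_Vx S s ts : sub S s = Some (Vx ts) ->
  above S s = [seq rcons s i | i <- iota 0 (size ts)].
Proof. by rewrite /above => ->. Qed.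

Lemma above_Eta S s : sub S s = Some Eta -> above S s = [::].
Proof. by rewrite /above => ->. Qed.

Lemma is_leaf_Vx (u : tree) p : is_leaf u p = if sub u p is Some Eta then true else false.
Proof. by []. Qed.

Lemma wf_sub u p v : wf u -> sub u p = Some v -> wf v.
Proof.
elim: p u => [|i p IH] u /=; first by move=> ? [<-].
case: u => // ts /andP[_ /(all_nthP Eta) hw]; case: ifP => // hi; apply: IH.
exact: hw.
Qed.

Definition dT : ltree label := LT ([::], [::]) [::].

Lemma mem_prodl (ls : seq (seq (ltree label))) cs :
  (cs \in prodl ls) <-> size cs = size ls /\
    (forall i, i < size ls -> nth dT cs i \in nth [::] ls i).
Proof.
elim: ls cs => [|l ls IH] cs /=.
  rewrite inE; split; first by move/eqP->.
  by case: cs => [|c cs] // [] /=.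
split.
  case/allpairsP => -[x y] /= [hx /IH [hs hy] ->] /=; split; first by rewrite hs.
  by case=> [|i] //= hi; apply: hy.
case: cs => [|c cs] /= [hs h]; first by [].
case: hs => hs; apply/allpairsP; exists (c, cs) => /=; split => //.
  exact: (h 0).
by apply/IH; split => // i hi; apply: (h i.+1).
Qed.

Lemma mem_senum u s m r B : B \in senum u s m r ->
  [\/ [/\ u = Eta, r = 0 & B = LT (s, nseq m 0) [::]],
      exists r', r = r'.+1 /\ exists2 b, b \in senum u s m.+1 r' & B = stepT s m b |
      exists ts, u = Vx ts /\ exists cs, [/\ B = LT (s, nseq m 0) cs, size cs = size ts &
        forall i, i < size ts -> nth dT cs i \in senum (nth Eta ts i) (rcons s i) m r]].
Proof.
case: u => [|ts].
  case: r => [|r]; first by rewrite senumE0 inE => /eqP ->; apply: Or31.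
  rewrite senumES => /mapP [b hb ->]; apply: Or32; exists r; split => //; by exists b.
rewrite senumV mem_cat => /orP[|].
  case/mapP => cs /mem_prodl [hs hc] ->; apply: Or33; exists ts; split => //.
  exists cs; rewrite chl_size in hs; split => // i hi.
  by have := hc i; rewrite chl_size chl_nth //; apply.
case: r => [|r] //; case/mapP => b hb ->; apply: Or32; exists r; split => //; by exists b.
Qed.

Lemma senum_leaf s m : LT (s, nseq m 0) [::] \in senum Eta s m 0.
Proof. by rewrite senumE0 inE. Qed.

Lemma senum_step u s m r b : b \in senum u s m.+1 r -> stepT s m b \in senum u s m r.+1.
Proof.
case: u => [|ts] hb; first by rewrite senumES map_f.
by rewrite senumV mem_cat map_f ?orbT.
Qed.

Lemma senum_exp ts s m r cs : size cs = size ts ->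
  (forall i, i < size ts -> nth dT cs i \in senum (nth Eta ts i) (rcons s i) m r) ->
  LT (s, nseq m 0) cs \in senum (Vx ts) s m r.
Proof.
move=> hs hc; rewrite senumV mem_cat map_f //.
apply/mem_prodl; rewrite chl_size; split => // i hi.
by rewrite chl_nth //; apply: hc.
Qed.

Lemma flatten_nthP (f : ltree label -> seq label) cs x :
  reflect (exists2 i, i < size cs & x \in f (nth dT cs i)) (x \in flatten (map f cs)).
Proof.
elim: cs => [|c cs IH] /=; first by rewrite in_nil; constructor => -[].
rewrite mem_cat; apply: (iffP orP).
  case=> [h|/IH [i hi h]]; [by exists 0 | by exists i.+1].
by case=> [[|i]] /= hi h; [left | right; apply/IH; exists i].
Qed.

Lemma labels_LT l cs x :
  (x \in labels (LT l cs)) = (x == l) || (x \in flatten (map (@labels label) cs)).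
Proof. by rewrite /= inE. Qed.

Lemma senum_inv u s m r B : B \in senum u s m r ->
  lab B = (s, nseq m 0) /\
  forall x, x \in labels B -> exists p k, [/\ x.1 = s ++ p, is_edge u p,
     m <= k <= m + r & x.2 = nseq k 0].
Proof.
elim/tree_ind3: u s m r B => [|ts IH] s m r B hB.
  elim: r m B hB => [|r IHr] m B; case/mem_senum.
  - case=> _ _ ->; split => // x; rewrite labels_LT /= orbF => /eqP ->.
    by exists [::], m; rewrite cats0 addn0 leqnn.
  - by case=> r' [].
  - by case=> ts [].
  - by case.
  - case=> r' [[<-] [b hb ->]]; split => // x; rewrite labels_LT /= cats0 => /orP[/eqP->|].
      by exists [::], m; rewrite cats0 leqnn leq_addr.
    move=> hx; have [_ /(_ x hx) [p [k [h1 h2 /andP[h3 h4] h5]]]] := IHr _ _ hb.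
    exists p, k; split => //; rewrite (ltnW h3) /=; by rewrite addnS -addSn.
  - by case=> ts [].
elim: r m B hB => [|r IHr] m B; case/mem_senum.
- by case.
- by case=> r' [].
- case=> _ [[<-] [cs [-> hs hc]]]; split => // x; rewrite labels_LT => /orP[/eqP->|].
    by exists [::], m; rewrite cats0 leqnn leq_addr.
  case/flatten_nthP => i hi hx; rewrite hs in hi.
  have [_ /(_ x hx) [p [k [h1 h2 h3 h4]]]] := IH i hi _ _ _ _ (hc i hi).
  exists (i :: p), k; split => //; first by rewrite h1 -cats1 -catA.
  by rewrite /is_edge /= hi.
- by case.
- case=> r' [[<-] [b hb ->]]; split => // x; rewrite labels_LT /= cats0 => /orP[/eqP->|].
    by exists [::], m; rewrite cats0 leqnn leq_addr.
  move=> hx; have [_ /(_ x hx) [p [k [h1 h2 /andP[h3 h4] h5]]]] := IHr _ _ hb.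
  exists p, k; split => //; rewrite (ltnW h3) /=; by rewrite addnS -addSn.
- case=> _ [[<-] [cs [-> hs hc]]]; split => // x; rewrite labels_LT => /orP[/eqP->|].
    by exists [::], m; rewrite cats0 leqnn leq_addr.
  case/flatten_nthP => i hi hx; rewrite hs in hi.
  have [_ /(_ x hx) [p [k [h1 h2 h3 h4]]]] := IH i hi _ _ _ _ (hc i hi).
  exists (i :: p), k; split => //; first by rewrite h1 -cats1 -catA.
  by rewrite /is_edge /= hi.
Qed.

Lemma is_leaf_Eta p : is_leaf Eta p = (p == [::]).
Proof. by case: p. Qed.

Lemma is_leaf_cons ts j p : is_leaf (Vx ts) (j :: p) = (j < size ts) && is_leaf (nth Eta ts j) p.
Proof. by rewrite /is_leaf /=; case: ifP. Qed.

Lemma is_leaf_Vnil ts : is_leaf (Vx ts) [::] = false.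
Proof. by []. Qed.

Lemma is_edge_cons ts j p : is_edge (Vx ts) (j :: p) = (j < size ts) && is_edge (nth Eta ts j) p.
Proof. by rewrite /is_edge /=; case: ifP. Qed.

Lemma wf_Vx ts : wf (Vx ts) -> 0 < size ts /\ forall i, i < size ts -> wf (nth Eta ts i).
Proof.
move=> /= /andP[hn /(all_nthP Eta) h]; split => //.
by case: ts hn {h}.
Qed.

Lemma leaf_senum u s m r B : wf u -> B \in senum u s m r ->
  forall x, x \in leaf_labels B <-> exists2 p, x = (s ++ p, nseq (m + r) 0) & is_leaf u p.
Proof.
elim/tree_ind3: u s m r B => [|ts IH] s m r B hw.
  elim: r m B => [|r IHr] m B; case/mem_senum.
  - case=> _ _ -> x /=; rewrite inE addn0; split.
      by move/eqP->; exists [::]; rewrite ?cats0.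
    by case=> p -> /=; rewrite is_leaf_Eta => /eqP->; rewrite cats0.
  - by case=> r' [].
  - by case=> ts [].
  - by case.
  - case=> r' [[<-] [b hb ->]] x /=; rewrite cats0 -addSnnS; exact: IHr.
  - by case=> ts [].
have [hsz hwi] := wf_Vx hw.
elim: r m B => [|r IHr] m B; case/mem_senum.
- by case.
- by case=> r' [].
- case=> _ [[<-] [cs [-> hs hc]]] x.
  rewrite /= (_ : (if cs is [::] then _ else _) = flatten (map (@leaf_labels label) cs)); last first.
    by case: (cs) hs => // hs0; rewrite -hs0 in hsz.
  split.
    case/flatten_nthP => i; rewrite hs => hi hx.
    have [p -> hp] := (IH i hi _ _ _ _ (hwi i hi) (hc i hi) x).1 hx.
    by exists (i :: p); rewrite ?cat_rcons // is_leaf_cons hi.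
  case=> -[|j p] ->; first by rewrite is_leaf_Vnil.
  rewrite is_leaf_cons => /andP[hj hp]; apply/flatten_nthP; exists j; first by rewrite hs.
  by apply/(IH j hj _ _ _ _ (hwi j hj) (hc j hj)); exists p; rewrite ?cat_rcons.
- by case.
- case=> r' [[<-] [b hb ->]] x /=; rewrite cats0 -addSnnS; exact: IHr.
- case=> _ [[<-] [cs [-> hs hc]]] x.
  rewrite /= (_ : (if cs is [::] then _ else _) = flatten (map (@leaf_labels label) cs)); last first.
    by case: (cs) hs => // hs0; rewrite -hs0 in hsz.
  split.
    case/flatten_nthP => i; rewrite hs => hi hx.
    have [p -> hp] := (IH i hi _ _ _ _ (hwi i hi) (hc i hi) x).1 hx.
    by exists (i :: p); rewrite ?cat_rcons // is_leaf_cons hi.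
  case=> -[|j p] ->; first by rewrite is_leaf_Vnil.
  rewrite is_leaf_cons => /andP[hj hp]; apply/flatten_nthP; exists j; first by rewrite hs.
  by apply/(IH j hj _ _ _ _ (hwi j hj) (hc j hj)); exists p; rewrite ?cat_rcons.
Qed.

Lemma uniq_flatten_nth (f : ltree label -> seq label) cs :
  (forall i, i < size cs -> uniq (f (nth dT cs i))) ->
  (forall i j x, i < size cs -> j < size cs -> x \in f (nth dT cs i) ->
     x \in f (nth dT cs j) -> i = j) ->
  uniq (flatten (map f cs)).
Proof.
elim: cs => [|c cs IH] //= hu hd; rewrite cat_uniq (hu 0) //=.
rewrite IH; last 2 first.
- by move=> i hi; apply: (hu i.+1).
- by move=> i j x hi hj h1 h2; have [] := hd i.+1 j.+1 x hi hj h1 h2.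
rewrite andbT; apply/hasPn => x /flatten_nthP [j hj hx]; apply/negP => hc.
by have := hd 0 j.+1 x isT hj hc hx.
Qed.

Lemma leaf_uniq u s m r B : wf u -> B \in senum u s m r -> uniq (leaf_labels B).
Proof.
elim/tree_ind3: u s m r B => [|ts IH] s m r B hw.
  elim: r m B => [|r IHr] m B; case/mem_senum.
  - by case=> _ _ ->.
  - by case=> r' [].
  - by case=> ts [].
  - by case.
  - by case=> r' [[<-] [b hb ->]] /=; rewrite cats0; apply: IHr hb.
  - by case=> ts [].
have [hsz hwi] := wf_Vx hw.
have key : forall m r cs, size cs = size ts ->
    (forall i, i < size ts -> nth dT cs i \in senum (nth Eta ts i) (rcons s i) m r) ->
    uniq (leaf_labels (LT (s, nseq m 0) cs)).
  move=> m' r' cs hs hc.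
  rewrite /= (_ : (if cs is [::] then _ else _) = flatten (map (@leaf_labels label) cs)); last first.
    by case: (cs) hs => // hs0; rewrite -hs0 in hsz.
  apply: uniq_flatten_nth; rewrite hs.
    by move=> i hi; apply: (IH i hi _ _ _ _ (hwi i hi) (hc i hi)).
  move=> i j x hi hj h1 h2.
  have [p e1 _] := (leaf_senum (hwi i hi) (hc i hi) x).1 h1.
  have [q e2 _] := (leaf_senum (hwi j hj) (hc j hj) x).1 h2.
  move: (congr1 (fun y => nth 0 y.1 (size s)) e1).
  by rewrite e2 /= !cat_rcons !nth_cat ltnn subnn.
elim: r m B => [|r IHr] m B; case/mem_senum.
- by case.
- by case=> r' [].
- by case=> _ [[<-] [cs [-> hs hc]]]; apply: key hs hc.
- by case.
- by case=> r' [[<-] [b hb ->]] /=; rewrite cats0; apply: IHr hb.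
- by case=> _ [[<-] [cs [-> hs hc]]]; apply: key hs hc.
Qed.

Definition ncond (S T : tree) := fun (x : label) (ls : seq label) =>
  let: (s, t) := x in
  [|| ls == [::],
      perm_eq ls [seq (s', t) | s' <- above S s]
    | perm_eq ls [seq (s, t') | t' <- above T t]].

Lemma nodes_senum S n u s m r B : sub S s = Some u -> m + r = n ->
  B \in senum u s m r -> all_nodes (ncond S (lin n)) B.
Proof.
elim/tree_ind3: u s m r B => [|ts IH] s m r B hsub hmr.
  elim: r m B hmr => [|r IHr] m B hmr; case/mem_senum.
  - by case=> _ _ ->.
  - by case=> r' [].
  - by case=> ts [].
  - by case.
  - case=> r' [[<-] [b hb ->]] /=.
    have hlt : m < n by rewrite -hmr addnS ltnS leq_addr.
    rewrite (above_lin (ltnW hlt)) hlt /= (senum_inv hb).1 perm_refl !orbT /=.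
    by rewrite (IHr m.+1 b) // addSnnS.
  - by case=> ts [].
elim: r m B hmr => [|r IHr] m B hmr; case/mem_senum.
- by case.
- by case=> r' [].
- case=> _ [[<-] [cs [-> hs hc]]] /=.
  have -> : map (@lab label) cs = [seq (s', nseq m 0) | s' <- above S s].
    rewrite (above_Vx hsub) -map_comp; apply: (@eq_from_nth _ ([::], [::])).
      by rewrite !size_map size_iota hs.
    move=> i; rewrite size_map hs => hi.
    rewrite (nth_map dT) ?hs // (nth_map 0) ?size_iota // nth_iota //=.
    by rewrite (senum_inv (hc i hi)).1.
  rewrite perm_refl orbT /=; apply/(all_nthP dT) => i; rewrite hs => hi.
  by apply: (IH i hi _ m 0 _ _ hmr (hc i hi)); rewrite sub_rcons hsub hi.
- by case.
- case=> r' [[<-] [b hb ->]] /=.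
  have hlt : m < n by rewrite -hmr addnS ltnS leq_addr.
  rewrite (above_lin (ltnW hlt)) hlt /= (senum_inv hb).1 perm_refl !orbT /=.
  by rewrite (IHr m.+1 b) // addSnnS.
- case=> _ [[<-] [cs [-> hs hc]]] /=.
  have -> : map (@lab label) cs = [seq (s', nseq m 0) | s' <- above S s].
    rewrite (above_Vx hsub) -map_comp; apply: (@eq_from_nth _ ([::], [::])).
      by rewrite !size_map size_iota hs.
    move=> i; rewrite size_map hs => hi.
    rewrite (nth_map dT) ?hs // (nth_map 0) ?size_iota // nth_iota //=.
    by rewrite (senum_inv (hc i hi)).1.
  rewrite perm_refl orbT /=; apply/(all_nthP dT) => i; rewrite hs => hi.
  by apply: (IH i hi _ m r.+1 _ _ hmr (hc i hi)); rewrite sub_rcons hsub hi.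
Qed.

Lemma edges_senum S n u s m r B : sub S s = Some u -> m + r = n ->
  B \in senum u s m r -> forall x, x \in labels B -> is_edge S x.1 && is_edge (lin n) x.2.
Proof.
move=> hsub hmr hB x hx; have [_ /(_ x hx) [p [k [-> hp /andP[_ hk] ->]]]] := senum_inv hB.
rewrite /is_edge sub_cat hsub sub_lin -?hmr //.
by move: hp; rewrite /is_edge; case: (sub u p).
Qed.

Lemma perm_flatten_mem (l l' : seq (ltree label)) x :
  Permutation.Permutation l l' ->
  (x \in flatten (map (@labels label) l)) = (x \in flatten (map (@labels label) l')).
Proof.
elim => //= [a k k' _ IH | a b k | k k' k'' _ IH1 _ IH2].
- by rewrite !mem_cat IH.
- by rewrite !mem_cat orbCA.
- by rewrite IH1.
Qed.

Lemma liso_labels (A B : ltree label) : liso A B ->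
  forall x, (x \in labels A) = (x \in labels B).
Proof.
elim/ltree_ind3: A B => l cs IH B hAB x.
inversion hAB; subst.
rewrite !labels_LT (perm_flatten_mem x H1); congr (_ || _).
elim: H3 IH => //= c d k k' hcd _ IHk IH.
rewrite !mem_cat (IH c (mem_head _ _) d hcd x) IHk //.
by move=> y hy; apply: IH; rewrite inE hy orbT.
Qed.

Lemma take_rcons_cat (s p : seq nat) i : take (size s).+1 (rcons s i ++ p) = rcons s i.
Proof. by rewrite -(size_rcons s i) take_size_cat. Qed.

Lemma senum_labels_det u s m r B1 B2 : wf u ->
  B1 \in senum u s m r -> B2 \in senum u s m r ->
  (forall x, (x \in labels B1) = (x \in labels B2)) -> B1 = B2.
Proof.
elim/tree_ind3: u s m r B1 B2 => [|ts IH] s m r B1 B2 hw.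
  elim: r m B1 B2 => [|r IHr] m B1 B2.
    move=> h1 h2 _; case/mem_senum: h1; [case=> _ _ -> | by case=> ? [] | by case=> ? []].
    by case/mem_senum: h2; [case=> _ _ -> | by case=> ? [] | by case=> ? []].
  move=> h1 h2.
  case/mem_senum: h1; [by case | case=> r1 [[<-] [b1 hb1 ->]] | by case=> ? []].
  case/mem_senum: h2; [by case | case=> r2 [[<-] [b2 hb2 ->]] | by case=> ? []].
  move=> hl; congr stepT; apply: (IHr _ _ _ hb1 hb2) => x.
  have := hl x; rewrite /stepT !labels_LT /= !cats0.
  case: eqP => // ->.
  have [_ h1] := senum_inv hb1; have [_ h2] := senum_inv hb2.
  case hx1 : (_ \in labels b1); first case/h1: hx1 => p [k [_ _ /andP[hk _] /= e]].
    by move: (congr1 size e); rewrite !size_nseq => ek; rewrite ek ltnn in hk.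
  case hx2 : (_ \in labels b2) => //; case/h2: hx2 => p [k [_ _ /andP[hk _] /= e]].
  by move: (congr1 size e); rewrite !size_nseq => ek; rewrite ek ltnn in hk.
have [hsz hwi] := wf_Vx hw.
have hchild : forall m r cs i x, size cs = size ts ->
    (forall i, i < size ts -> nth dT cs i \in senum (nth Eta ts i) (rcons s i) m r) ->
    i < size ts ->
    (x \in labels (nth dT cs i)) =
    (x \in labels (LT (s, nseq m 0) cs)) && (take (size s).+1 x.1 == rcons s i).
  move=> {}m {}r cs i x hs hc hi.
  apply/idP/andP.
    move=> hx; have [_ /(_ x hx) [p [k [e _ _ _]]]] := senum_inv (hc i hi).
    split; last by rewrite e take_rcons_cat.
    by rewrite labels_LT; apply/orP; right; apply/flatten_nthP; exists i; rewrite ?hs.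
  rewrite labels_LT => -[/orP[/eqP->|]] /=.
    by rewrite /= take_oversize // => /eqP/(congr1 size); rewrite size_rcons => /n_Sn.
  case/flatten_nthP => j; rewrite hs => hj hx.
  have [_ /(_ x hx) [p [k [e _ _ _]]]] := senum_inv (hc j hj).
  rewrite e take_rcons_cat eqseq_rcons eqxx /= => /eqP ij.
  by rewrite -ij.
have hstep : forall m' r' b, b \in senum (Vx ts) s m'.+1 r' ->
    (rcons s 0, nseq m' 0) \notin labels (stepT s m' b).
  move=> m' r' b hb; rewrite labels_LT /= cats0; apply/negP => /orP[/eqP[]|].
    by move/(congr1 size); rewrite size_rcons => /esym/n_Sn.
  have [_ h] := senum_inv hb; case/h => p [k [_ _ /andP[hk _] /= e]].
  by move: (congr1 size e); rewrite !size_nseq => ek; rewrite ek ltnn in hk.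
have hexp : forall m cs r', size cs = size ts ->
    (forall i, i < size ts -> nth dT cs i \in senum (nth Eta ts i) (rcons s i) m r') ->
    (rcons s 0, nseq m 0) \in labels (LT (s, nseq m 0) cs).
  move=> {}m cs r' hs hc; rewrite labels_LT; apply/orP; right; apply/flatten_nthP.
  exists 0; rewrite ?hs //; have [hl0 _] := senum_inv (hc 0 hsz).
  by case: (nth dT cs 0) hl0 => l0 c0 /= ->; rewrite labels_LT eqxx.
have hee : forall m r cs1 cs2, size cs1 = size ts -> size cs2 = size ts ->
    (forall i, i < size ts -> nth dT cs1 i \in senum (nth Eta ts i) (rcons s i) m r) ->
    (forall i, i < size ts -> nth dT cs2 i \in senum (nth Eta ts i) (rcons s i) m r) ->
    (forall x, (x \in labels (LT (s, nseq m 0) cs1)) = (x \in labels (LT (s, nseq m 0) cs2))) ->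
    LT (s, nseq m 0) cs1 = LT (s, nseq m 0) cs2.
  move=> {}m {}r cs1 cs2 hs1 hs2 hc1 hc2 hl; congr LT.
  apply: (@eq_from_nth _ dT); rewrite hs1 ?hs2 // => i hi.
  apply: (IH i hi _ _ _ _ _ (hwi i hi) (hc1 i hi) (hc2 i hi)) => x.
  by rewrite (hchild _ _ _ _ _ hs1 hc1 hi) (hchild _ _ _ _ _ hs2 hc2 hi) hl.
elim: r m B1 B2 => [|r IHr] m B1 B2 h1 h2.
  case/mem_senum: h1; [by case | by case=> ? [] | case=> _ [[<-] [cs1 [-> hs1 hc1]]]].
  case/mem_senum: h2; [by case | by case=> ? [] | case=> _ [[<-] [cs2 [-> hs2 hc2]]]].
  exact: hee hs1 hs2 hc1 hc2.
case/mem_senum: h1; [by case | case=> r1 [[<-] [b1 hb1 ->]] | case=> _ [[<-] [cs1 [-> hs1 hc1]]]];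
  case/mem_senum: h2; [by case | case=> r2 [[<-] [b2 hb2 ->]] | case=> _ [[<-] [cs2 [-> hs2 hc2]]]
                      | by case | case=> r2 [[<-] [b2 hb2 ->]] | case=> _ [[<-] [cs2 [-> hs2 hc2]]]].
- move=> hl; congr stepT; apply: (IHr _ _ _ hb1 hb2) => x.
  have := hl x; rewrite /stepT !labels_LT /= !cats0.
  case: eqP => // ->.
  have [_ h1] := senum_inv hb1; have [_ h2] := senum_inv hb2.
  case hx1 : (_ \in labels b1); first case/h1: hx1 => p [k [_ _ /andP[hk _] /= e]].
    by move: (congr1 size e); rewrite !size_nseq => ek; rewrite ek ltnn in hk.
  case hx2 : (_ \in labels b2) => //; case/h2: hx2 => p [k [_ _ /andP[hk _] /= e]].
  by move: (congr1 size e); rewrite !size_nseq => ek; rewrite ek ltnn in hk.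
- move=> /(_ (rcons s 0, nseq m 0)); rewrite (hexp _ _ _ hs2 hc2).
  by move/negbTE: (hstep _ _ _ hb1) => ->.
- move=> /(_ (rcons s 0, nseq m 0)); rewrite (hexp _ _ _ hs1 hc1).
  by move/negbTE: (hstep _ _ _ hb2) => ->.
- exact: hee hs1 hs2 hc1 hc2.
Qed.

Lemma uniq_prodl (ls : seq (seq (ltree label))) :
  (forall i, i < size ls -> uniq (nth [::] ls i)) -> uniq (prodl ls).
Proof.
elim: ls => [|l ls IH] //= hu; apply: allpairs_uniq.
- exact: (hu 0).
- by apply: IH => i hi; apply: (hu i.+1).
- by move=> [x y] [x' y'] _ _ /= [-> ->].
Qed.

Lemma senum_uniq u s m r : wf u -> uniq (senum u s m r).
Proof.
elim/tree_ind3: u s m r => [|ts IH] s m r hw.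
  elim: r m => [|r IHr] m //; rewrite senumES map_inj_uniq ?IHr //.
  by move=> b b' [].
have [hsz hwi] := wf_Vx hw.
elim: r m => [|r IHr] m; rewrite senumV.
  rewrite cats0 map_inj_uniq; last by move=> x y [].
  by apply: uniq_prodl => i; rewrite chl_size => hi; rewrite chl_nth //; exact: IH i hi _ _ _ (hwi i hi).
rewrite cat_uniq map_inj_uniq; last by move=> x y [].
rewrite uniq_prodl; last by move=> i; rewrite chl_size => hi; rewrite chl_nth //; exact: IH i hi _ _ _ (hwi i hi).
rewrite map_inj_uniq ?IHr ?andbT; last by move=> x y [].
apply/hasPn => y /mapP [b hb ->]; apply/negP => /mapP [cs /mem_prodl [hs hc] [e]].
move: hs hc; rewrite chl_size -e => hs /(_ 0 hsz); rewrite chl_nth //= => hb0.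
have [l1 _] := senum_inv hb; have [l2 _] := senum_inv hb0.
move: (congr1 (fun z => size z.1) l1); rewrite l2 /= size_rcons.
by move/esym/n_Sn.
Qed.

Lemma liso_refl (A : ltree label) : liso A A.
Proof.
elim/ltree_ind3: A => l cs IH; apply: (@liso_intro _ l cs cs cs).
  exact: Permutation.Permutation_refl.
elim: cs IH => [|c cs IHc] IH; first by constructor.
constructor; first by apply: IH; rewrite mem_head.
by apply: IHc => x hx; apply: IH; rewrite inE hx orbT.
Qed.

Lemma liso_lab (A B : ltree label) : liso A B -> lab B = lab A.
Proof. by case. Qed.

Lemma app_cat (T : Type) (a b : seq T) : (a ++ b)%list = a ++ b.
Proof. by elim: a => //= ? ? ->. Qed.

Lemma perm_eq_Perm (T : eqType) (s1 s2 : seq T) : perm_eq s1 s2 -> Permutation.Permutation s1 s2.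
Proof.
elim: s1 s2 => [|x s1 IH] s2.
  by move/perm_size; case: s2 => // _; constructor.
move=> hp; have hx : x \in s2 by rewrite -(perm_mem hp) mem_head.
case/splitPr: hx hp => s2a s2b hp.
apply: Permutation.perm_trans (Permutation.Permutation_middle _ _ _).
apply: Permutation.perm_skip; apply: IH.
rewrite app_cat -(perm_cons x); apply: (perm_trans hp).
by apply/permP => p; rewrite /= !count_cat /= addnCA.
Qed.

Lemma Forall2_choice (X Y : Type) (P : X -> Y -> Prop) (s : seq X) :
  (forall i, i < size s -> forall x0, exists y, P (nth x0 s i) y) ->
  exists t, List.Forall2 P s t.
Proof.
elim: s => [|x s IH] h; first by exists [::]; constructor.
have [y hy] := h 0 isT x.
have [t ht] : exists t, List.Forall2 P s t by apply: IH => i hi; apply: (h i.+1).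
by exists (y :: t); constructor.
Qed.

Lemma Forall2_r (P : ltree label -> ltree label -> Prop) s t :
  List.Forall2 P s t -> forall y, y \in t -> exists2 x, x \in s & P x y.
Proof.
elim => // x y s' t' hxy _ IH z; rewrite inE => /orP[/eqP->|/IH [x' hx' h]].
  by exists x; rewrite ?mem_head.
by exists x'; rewrite // inE hx' orbT.
Qed.

Lemma Forall2_lab (P : ltree label -> ltree label -> Prop) s t :
  (forall x y, P x y -> lab y = lab x) ->
  List.Forall2 P s t -> map (@lab label) t = map (@lab label) s.
Proof. by move=> hP; elim => //= x y s' t' /hP -> _ ->. Qed.

Lemma Forall2_weaken (P Q : ltree label -> ltree label -> Prop) s t :
  (forall x y, P x y -> Q x y) -> List.Forall2 P s t -> List.Forall2 Q s t.
Proof. by move=> hPQ; elim => [|x y s' t' /hPQ h _ IH]; constructor. Qed.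

Lemma uniq_lab_inj (s : seq (ltree label)) x y : uniq (map (@lab label) s) ->
  x \in s -> y \in s -> lab x = lab y -> x = y.
Proof.
elim: s => //= a s IH /andP[ha hu]; rewrite !inE.
case/orP=> [/eqP->|hx]; case/orP=> [/eqP->|hy] //.
- by move=> e; move: ha; rewrite e map_f.
- by move=> e; move: ha; rewrite -e map_f.
- exact: IH.
Qed.

Lemma rcons_injl (s : seq nat) i j : rcons s i = rcons s j -> i = j.
Proof. by move/(congr1 (last 0)); rewrite !last_rcons. Qed.

Lemma construct S n (A : ltree label) : forall s m u,
  all_nodes (ncond S (lin n)) A ->
  (forall x, x \in leaf_labels A -> is_leaf S x.1 && is_leaf (lin n) x.2) ->
  lab A = (s, nseq m 0) -> sub S s = Some u -> m <= n ->
  exists2 B, B \in senum u s m (n - m) & liso A B.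
Proof.
elim/ltree_ind3: A => l cs IH s m u /= /andP[hn ha] hleaf hl hsub hmn.
subst l.
have hchild : forall c, c \in cs -> all_nodes (ncond S (lin n)) c /\
    (forall x, x \in leaf_labels c -> is_leaf S x.1 && is_leaf (lin n) x.2).
  move=> c hc; split; first by apply: (allP ha).
  move=> x hx; move: hc hleaf; case: (cs) => // c0 cs0 hc hleaf; apply: hleaf.
  by apply/flattenP; exists (leaf_labels c) => //; apply: map_f.
have [hcs0|hcs0] := eqVneq cs [::].
  subst cs; have := hleaf (s, nseq m 0); rewrite /= mem_head => /(_ isT) /andP[h1 h2].
  rewrite /is_leaf hsub in h1; rewrite /is_leaf sub_lin // in h2.
  case: u hsub h1 => // hsub _.
  case e: (n - m) h2 => [|k] // _.
  by exists (LT (s, nseq m 0) [::]); [exact: senum_leaf | exact: liso_refl].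
have hcsz : size cs != 0 by rewrite size_eq0.
rewrite /ncond in hn; case/or3P: hn.
- by move/eqP/(congr1 size); rewrite size_map /= => /eqP; rewrite (negbTE hcsz).
- case: u hsub => [|ts] hsub hp.
    by move: (perm_size hp); rewrite (above_Eta hsub) size_map => /eqP; rewrite (negbTE hcsz).
  rewrite (above_Vx hsub) -map_comp in hp.
  set Ls := map _ (iota _ _) in hp.
  pose P c b := liso c b /\ exists2 i, i < size ts &
     lab c = (rcons s i, nseq m 0) /\ b \in senum (nth Eta ts i) (rcons s i) m (n - m).
  have hP : forall i, i < size cs -> forall x0, exists b, P (nth x0 cs i) b.
    move=> i0 hi0 x0; set c := nth x0 cs i0.
    have hc : c \in cs by rewrite mem_nth.
    have : lab c \in Ls by move: (perm_mem hp (lab c)); rewrite map_f // => <-.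
    case/mapP => i; rewrite mem_iota add0n => /andP[_ hi] /= hlc.
    have [hnc hlc'] := hchild c hc.
    have hsub' : sub S (rcons s i) = Some (nth Eta ts i) by rewrite sub_rcons hsub hi.
    have [b hb hcb] := IH c hc (rcons s i) m (nth Eta ts i) hnc hlc' hlc hsub' hmn.
    by exists b; split => //; exists i.
  have [cs'' hF] := Forall2_choice hP.
  have hlab : map (@lab label) cs'' = map (@lab label) cs.
    by apply: (Forall2_lab _ hF) => x y [h _]; apply: liso_lab.
  have hLu : uniq Ls.
    rewrite map_inj_uniq ?iota_uniq // => i j /= [].
    exact: rcons_injl.
  have hu : uniq (map (@lab label) cs'') by rewrite hlab (perm_uniq hp).
  pose pickb i := head dT [seq b <- cs'' | lab b == (rcons s i, nseq m 0)].
  have hpick : forall i, i < size ts -> pickb i \in cs'' /\ lab (pickb i) = (rcons s i, nseq m 0).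
    move=> i hi.
    have : (rcons s i, nseq m 0) \in map (@lab label) cs''.
      by rewrite hlab (perm_mem hp) (map_f (fun i => (rcons s i, nseq m 0))) // mem_iota.
    case/mapP => b0 hb0 e0.
    have hb0F : b0 \in [seq b <- cs'' | lab b == (rcons s i, nseq m 0)].
      by rewrite mem_filter -e0 eqxx hb0.
    rewrite /pickb; case eF: [seq b <- cs'' | _] hb0F => [|b1 F'] // _.
    have : b1 \in [seq b <- cs'' | lab b == (rcons s i, nseq m 0)] by rewrite eF mem_head.
    by rewrite mem_filter => /andP[/eqP e1 h1].
  set csB := map pickb (iota 0 (size ts)).
  have hsB : size csB = size ts by rewrite size_map size_iota.
  have hnB : forall i, i < size ts -> nth dT csB i = pickb i.
    by move=> i hi; rewrite (nth_map 0) ?size_iota // nth_iota.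
  have hmemB : forall i, i < size ts ->
      nth dT csB i \in senum (nth Eta ts i) (rcons s i) m (n - m).
    move=> i hi; rewrite hnB //; have [hin hl'] := hpick i hi.
    have [c hc [hcb [j hj [hlc hbj]]]] := Forall2_r hF hin.
    move: (liso_lab hcb); rewrite hl' hlc => -[/rcons_injl ij].
    by rewrite -ij in hbj.
  have hperm : perm_eq csB cs''.
    apply: uniq_perm.
    - have hmB : map (@lab label) csB = Ls.
        rewrite /csB /Ls -map_comp; apply/eq_in_map => i; rewrite mem_iota add0n => /andP[_ hi].
        by rewrite /= (hpick i hi).2.
      by apply: (map_uniq (f := @lab label)); rewrite hmB.
    - exact: map_uniq hu.
    - move=> b; apply/idP/idP.
        case/mapP => i; rewrite mem_iota add0n => /andP[_ hi] ->.
        exact: (hpick i hi).1.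
      move=> hb; have : lab b \in Ls.
        by move: (perm_mem hp (lab b)); rewrite -hlab map_f // => <-.
      case/mapP => i; rewrite mem_iota add0n => /andP[_ hi] /= e.
      have [hin hl'] := hpick i hi.
      have -> : b = pickb i by apply: (uniq_lab_inj hu) => //; rewrite e hl'.
      by apply: map_f; rewrite mem_iota add0n.
  exists (LT (s, nseq m 0) csB); first exact: senum_exp hsB hmemB.
  apply: (@liso_intro _ (s, nseq m 0) cs csB cs''); first exact: perm_eq_Perm.
  by apply: (Forall2_weaken _ hF) => x y [].
- rewrite above_lin //; case: ltnP => hlt hp; last first.
    by move: (perm_size hp); rewrite size_map => /eqP; rewrite (negbTE hcsz).
  case: cs IH hchild hcsz hp {hleaf ha hcs0} => [|c [|c' cs']] //= IH hchild _ hp; last first.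
    by move: (perm_size hp).
  have hlc : lab c = (s, nseq m.+1 0).
    by move: (perm_mem hp (lab c)); rewrite !inE eqxx => /esym/eqP.
  have [hnc hlc'] := hchild c (mem_head _ _).
  have [b hb hcb] := IH c (mem_head _ _) s m.+1 u hnc hlc' hlc hsub hlt.
  exists (stepT s m b); first by rewrite -(subnSK hlt); exact: senum_step.
  apply: (@liso_intro _ (s, nseq m 0) [:: c] [:: b] [:: b]).
    exact: Permutation.Permutation_refl.
  by constructor => //; constructor.
Qed.

Lemma is_leaf_lin n t : is_leaf (lin n) t = (t == nseq n 0).
Proof.
apply/idP/eqP => [|->]; last by rewrite /is_leaf sub_lin // subnn.
rewrite /is_leaf; case e: (sub (lin n) t) => [u|] //.
case/sub_linE: e => k hk [-> ->].
case e2: (n - k) => [|d] // _.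
by congr nseq; apply/eqP; rewrite eqn_leq hk -subn_eq0 e2.
Qed.

Lemma senum_shuffle S n B : wf S -> B \in senum S [::] 0 n -> is_shuffle S (lin n) B.
Proof.
move=> hS hB; split.
- by rewrite (senum_inv hB).1.
- exact: (edges_senum (sub_nil S) (add0n n) hB).
- exact: leaf_uniq hS hB.
- move=> s t; apply/idP/idP.
    case/(leaf_senum hS hB) => p [-> ->] hp.
    by rewrite hp is_leaf_lin add0n eqxx.
  case/andP => h1; rewrite is_leaf_lin => /eqP ->.
  by apply/(leaf_senum hS hB); exists s; rewrite ?add0n.
- exact: (nodes_senum (sub_nil S) (add0n n) hB).
Qed.

Lemma sh_is_cnt S n : wf S -> sh_is S (lin n) (cnt S n).
Proof.
move=> hS.
set E := senum S [::] 0 n.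
have hE : size E = cnt S n by rewrite size_senum.
exists (fun i : 'I_(cnt S n) => nth dT E i); split.
- move=> i; apply: senum_shuffle hS _; apply: mem_nth; rewrite hE; exact: ltn_ord.
- move=> i j h; apply: val_inj => /=.
  have hi : i < size E by rewrite hE ltn_ord.
  have hj : j < size E by rewrite hE ltn_ord.
  have := senum_labels_det hS (mem_nth dT hi) (mem_nth dT hj) (liso_labels h).
  by move/eqP; rewrite nth_uniq ?senum_uniq // => /eqP.
- move=> A [h1 h2 h3 h4 h5].
  have hl : forall x, x \in leaf_labels A -> is_leaf S x.1 && is_leaf (lin n) x.2.
    by case=> s t; rewrite h4.
  have [B hB hAB] := @construct S n A [::] 0 S h5 hl h1 (sub_nil S) (leq0n n).
  rewrite subn0 in hB.
  have hi : index B E < cnt S n by rewrite -hE index_mem.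
  by exists (Ordinal hi); rewrite /= nth_index.
Qed.

Local Open Scope ring_scope.

Theorem mainTheorem6 (S : tree) (hS : wf S) :
  exists p : {poly rat},
    [/\ size p = (nvert S).+1,
        lead_coef p = ((tfact S)%:R)^-1 &
        forall n : nat, exists k : nat,
          sh_is S (lin n) k /\ p.[n%:R] = k%:R].
Proof.
have [p [h1 h2 h3]] := cnt_poly S.
exists p; split => // n; exists (cnt S n); split; last exact: h3.
exact: sh_is_cnt.
Qed.
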